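(* Let $n\ge4$. (i) Every variety with two-headed directed Gumm terms $p,t_2,\dots,t_{n-2},q$ is $(2n-3)$-reversed-modular, hence $(2n-2)$-modular. In particular this applies to every variety which is $n$-directed with alvin heads. (ii) There is a locally finite variety which is $n$-directed with alvin heads (in particular has two-headed directed Gumm terms $p,t_2,\dots,t_{n-2},q$) but is not $(2n-3)$-modular.
   Context: Two-headed directed Gumm terms (for $n\ge4$): ternary terms $p,t_2,\dots,t_{n-2},q$ satisfying $t_h(x,y,x)=x$ for $2\le h\le n-2$; $p(x,z,z)=x$ and $p(x,x,z)=t_2(x,x,z)$; $t_h(x,z,z)=t_{h+1}(x,x,z)$ for $2\le h<n-2$; $t_{n-2}(x,z,z)=q(x,z,z)$ and $q(x,x,z)=z$. If in addition $p(x,y,x)=x$ and $q(x,y,x)=x$, the variety is called $n$-directed with alvin heads. Day terms: $4$-ary $u_0,\dots,u_m$ with $u_k(x,y,y,x)=x$ for all $k$, $u_0(x,y,z,w)=x$, $u_m(x,y,z,w)=w$, $u_k(x,x,w,w)=u_{k+1}(x,x,w,w)$ for even $k$, $u_k(x,y,y,w)=u_{k+1}(x,y,y,w)$ for odd $k$; reversed Day terms: even/odd exchanged in the last two. $m$-modular ($m$-reversed-modular): having Day (reversed Day) terms $u_0,\dots,u_m$. *)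

(* Defs.v *)
From mathcomp Require Import all_boot.
Set Implicit Arguments. Unset Strict Implicit. Unset Printing Implicit Defensive.

Record signature := Signature { op : Type; arity : op -> nat }.

Inductive term (S : signature) (X : Type) : Type :=
  | Var : X -> term S X
  | App : forall f : op S, ('I_(arity f) -> term S X) -> term S X.
Arguments Var {S X} _.
Arguments App {S X} f _.

Record algebra (S : signature) := Algebra {
  carrier :> Type;
  interp : forall f : op S, ('I_(arity f) -> carrier) -> carrier }.

Fixpoint eval (S : signature) (A : algebra S) (X : Type) (v : X -> A)
    (t : term S X) : A :=
  match t with
  | Var x => v x
  | App f args => @interp S A f (fun i => @eval S A X v (args i))
  end.

(* A variety of signature S, given (Birkhoff) by a set of defining
   identities between terms in the variables 0,1,2,... *)
Definition variety (S : signature) := term S nat -> term S nat -> Prop.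

Definition in_variety (S : signature) (V : variety S) (A : algebra S) : Prop :=
  forall s t, V s t -> forall v : nat -> A, @eval S A nat v s = @eval S A nat v t.

Definition top3 (S : signature) (A : algebra S) (t : term S 'I_3) (a b c : A) : A :=
  @eval S A _ (fun i : 'I_3 => nth a [:: a; b; c] i) t.
Definition top4 (S : signature) (A : algebra S) (t : term S 'I_4)
    (a b c d : A) : A :=
  @eval S A _ (fun i : 'I_4 => nth a [:: a; b; c; d] i) t.

(* p, t_2, ..., t_{n-2}, q ; the family t is indexed by nat, only the
   indices 2 <= h <= n-2 matter. *)
Definition tdg_identities (S : signature) (V : variety S) (n : nat)
    (p q : term S 'I_3) (t : nat -> term S 'I_3) : Prop :=
  forall A : algebra S, in_variety V A -> forall x y z : A,
    (forall h, 2 <= h <= n - 2 -> top3 (t h) x y x = x) /\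
    top3 p x z z = x /\
    top3 p x x z = top3 (t 2) x x z /\
    (forall h, 2 <= h < n - 2 -> top3 (t h) x z z = top3 (t h.+1) x x z) /\
    top3 (t (n - 2)) x z z = top3 q x z z /\
    top3 q x x z = z.

Definition has_two_headed_directed_Gumm (S : signature) (V : variety S) (n : nat) :=
  exists (p q : term S 'I_3) (t : nat -> term S 'I_3), tdg_identities V n p q t.

Definition n_directed_alvin_heads (S : signature) (V : variety S) (n : nat) :=
  exists (p q : term S 'I_3) (t : nat -> term S 'I_3),
    tdg_identities V n p q t /\
    forall A : algebra S, in_variety V A -> forall x y : A,
      top3 p x y x = x /\ top3 q x y x = x.

Definition day_terms (S : signature) (V : variety S) (m : nat)
    (u : nat -> term S 'I_4) : Prop :=
  forall A : algebra S, in_variety V A -> forall x y z w : A,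
    (forall k, k <= m -> top4 (u k) x y y x = x) /\
    top4 (u 0) x y z w = x /\
    top4 (u m) x y z w = w /\
    (forall k, k < m -> ~~ odd k -> top4 (u k) x x w w = top4 (u k.+1) x x w w) /\
    (forall k, k < m -> odd k -> top4 (u k) x y y w = top4 (u k.+1) x y y w).

Definition reversed_day_terms (S : signature) (V : variety S) (m : nat)
    (u : nat -> term S 'I_4) : Prop :=
  forall A : algebra S, in_variety V A -> forall x y z w : A,
    (forall k, k <= m -> top4 (u k) x y y x = x) /\
    top4 (u 0) x y z w = x /\
    top4 (u m) x y z w = w /\
    (forall k, k < m -> odd k -> top4 (u k) x x w w = top4 (u k.+1) x x w w) /\
    (forall k, k < m -> ~~ odd k -> top4 (u k) x y y w = top4 (u k.+1) x y y w).

Definition m_modular (S : signature) (V : variety S) (m : nat) :=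
  exists u : nat -> term S 'I_4, day_terms V m u.

Definition m_reversed_modular (S : signature) (V : variety S) (m : nat) :=
  exists u : nat -> term S 'I_4, reversed_day_terms V m u.

Definition locally_finite (S : signature) (V : variety S) : Prop :=
  forall A : algebra S, in_variety V A ->
    forall (k : nat) (g : 'I_k -> A),
      (forall a : A, exists t : term S 'I_k, @eval S A _ g t = a) ->
      exists (N : nat) (e : 'I_N -> A), forall a : A, exists i, e i = a.

(* Main.v *)
Require Import Defs.
From mathcomp Require Import all_boot.
From mathcomp Require Import zify.
From Stdlib Require Import FunctionalExtensionality ClassicalEpsilon Classical_Prop.
Set Implicit Arguments. Unset Strict Implicit. Unset Printing Implicit Defensive.

Definition med (a b c : nat) := maxn (minn a b) (minn (maxn a b) c).
Definition cl (N x : nat) := minn (maxn x 1) N.-1.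
Definition ba (N j x z : nat) := med (cl N x) (cl N z) (if x <= z then j else N - j).
Definition pa (N x y z : nat) := if (x == z) || (y == z) then x else cl N x.
Definition qa (N x y z : nat) := if x == z then x else if x == y then z else cl N z.
Definition ta (N h x y z : nat) := if x == z then x else med (ba N h.-1 x z) y (ba N h x z).
Definition Tg (j : nat) := if j == 1 then 0 else j.
Definition bg (N j x z : nat) := if (x == N) || (z == N) then N
  else med x z (if x < z then Tg j else N.-1 - Tg j).
Definition Gg (N h x z : nat) := med x z (if x < z then h.-1 else N - h).
Definition pg (N x y z : nat) := if (x == z) || (y == z) then x else if z == N then N else x.
Definition qg (N x y z : nat) := if x == z then x else if y == x then z else if x == N then N else z.
Definition tg (N h x y z : nat) := if x == z then x else if (x == N) || (z == N) then N
  else if y == N then Gg N h x z else med (bg N h.-1 x z) y (bg N h x z).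
Definition fa (N f : nat) : nat -> nat -> nat -> nat := if f <= 1 then pa N else if f < N then ta N f else qa N.
Definition fg (N f : nat) : nat -> nat -> nat -> nat := if f <= 1 then pg N else if f < N then tg N f else qg N.
Definition okp N (a c : nat) := (a <= N) && ((c == N) || ((c < N) && (c <= a <= c.+1))).

Lemma med_mono a b c a' b' c' : a <= a' -> b <= b' -> c <= c' -> med a b c <= med a' b' c'.
Proof. rewrite /med; lia. Qed.
Lemma med_S a b c : med a.+1 b.+1 c.+1 = (med a b c).+1.
Proof. rewrite /med; lia. Qed.
Lemma med_lo13 a b c : minn a c <= med a b c.
Proof. rewrite /med; lia. Qed.
Lemma med_hi13 a b c : med a b c <= maxn a c.
Proof. rewrite /med; lia. Qed.
Lemma med_lo12 a b c : minn a b <= med a b c.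
Proof. rewrite /med; lia. Qed.
Lemma med_hi12 a b c : med a b c <= maxn a b.
Proof. rewrite /med; lia. Qed.
Lemma med_eq1 a b c : (b <= a <= c) || (c <= a <= b) -> med a b c = a.
Proof. rewrite /med; lia. Qed.

Lemma cl_win N c a : 1 <= N -> c < N -> c <= a <= c.+1 -> c <= cl N a <= c.+1.
Proof. rewrite /cl; lia. Qed.

Lemma L1 c1 c3 u v t : c1 <= u <= c1.+1 -> c3 <= v <= c3.+1 ->
  med c1 c3 t <= med u v t <= (med c1 c3 t).+1.
Proof.
move=> /andP[h1 h2] /andP[h3 h4]; apply/andP; split; first exact: med_mono.
rewrite -med_S; apply: med_mono => //.
Qed.
Lemma L2 c1 c3 u v t : c1 <= u <= c1.+1 -> c3 <= v <= c3.+1 ->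
  med c1 c3 t.+1 <= med u v t.+1 <= (med c1 c3 t).+1.
Proof.
move=> /andP[h1 h2] /andP[h3 h4]; apply/andP; split; first exact: med_mono.
rewrite -med_S; apply: med_mono => //.
Qed.

Lemma stair_dir c1 a1 c3 a3 : c1 <= a1 <= c1.+1 -> c3 <= a3 <= c3.+1 -> c1 < c3 -> a1 <= a3.
Proof. lia. Qed.

Lemma Lb N j a1 c1 a3 c3 : 3 <= N -> 1 <= j <= N.-1 -> c1 < N -> c3 < N ->
  c1 <= a1 <= c1.+1 -> c3 <= a3 <= c3.+1 -> c1 != c3 -> a1 != a3 ->
  bg N j c1 c3 <= ba N j a1 a3 <= (bg N j c1 c3).+1.
Proof.
move=> hN hj h1 h3 w1 w3 nc na.
have cw1 := cl_win (ltnW (ltnW hN)) h1 w1.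
have cw3 := cl_win (ltnW (ltnW hN)) h3 w3.
rewrite /bg /ba (ltn_eqF h1) (ltn_eqF h3) /=.
set u := cl N a1 in cw1 *; set v := cl N a3 in cw3 *.
have [lt13|ge13] := ltnP c1 c3.
- have -> : a1 <= a3 by lia.
  rewrite /Tg; case: eqP => [->|ne1].
  + have -> : med c1 c3 0 = c1 by rewrite /med; lia.
    have -> : med u v 1 = u by rewrite /med /u /v /cl in cw1 cw3 *; lia.
    exact: cw1.
  + exact: L1.
- have lt31 : c3 < c1 by rewrite ltn_neqAle eq_sym nc ge13.
  have -> : (a1 <= a3) = false by lia.
  rewrite /Tg; case: eqP => [->|ne1].
  + rewrite subn0 (_ : N - 1 = N.-1); last by lia. exact: L1.
  + have -> : N - j = (N.-1 - j).+1 by lia.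
    apply/andP; split; last by case/andP: (L2 (N.-1 - j) cw1 cw3).
    apply: (leq_trans _ (proj1 (andP (L2 (N.-1 - j) cw1 cw3)))).
    apply: med_mono => //.
Qed.

Lemma LG N h a1 c1 a3 c3 : 3 <= N -> 2 <= h <= N.-1 -> c1 < N -> c3 < N ->
  c1 <= a1 <= c1.+1 -> c3 <= a3 <= c3.+1 -> c1 != c3 -> a1 != a3 ->
  (Gg N h c1 c3 <= ba N h.-1 a1 a3 <= (Gg N h c1 c3).+1) /\
  (Gg N h c1 c3 <= ba N h a1 a3 <= (Gg N h c1 c3).+1).
Proof.
move=> hN hj h1 h3 w1 w3 nc na.
have cw1 := cl_win (ltnW (ltnW hN)) h1 w1.
have cw3 := cl_win (ltnW (ltnW hN)) h3 w3.
rewrite /Gg /ba.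
set u := cl N a1 in cw1 *; set v := cl N a3 in cw3 *.
have [lt13|ge13] := ltnP c1 c3.
- have -> : a1 <= a3 by lia.
  split; first exact: L1.
  have -> : h = h.-1.+1 by lia.
  rewrite -pred_Sn.
  case/andP: (L2 h.-1 cw1 cw3) => A B; rewrite B andbT.
  apply: leq_trans A; apply: med_mono => //.
- have lt31 : c3 < c1 by rewrite ltn_neqAle eq_sym nc ge13.
  have -> : (a1 <= a3) = false by lia.
  split; last exact: L1.
  have -> : N - h.-1 = (N - h).+1 by lia.
  case/andP: (L2 (N - h) cw1 cw3) => A B; rewrite B andbT.
  apply: leq_trans A; apply: med_mono => //.
Qed.

Lemma ba_le N j x z : 1 <= N -> ba N j x z <= N.-1.
Proof. move=> hN; rewrite /ba /med /cl; lia. Qed.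

Lemma ba_win N j x z c : 1 <= N -> c < N -> c <= x <= c.+1 -> c <= z <= c.+1 ->
  c <= ba N j x z <= c.+1.
Proof.
move=> hN hc wx wz.
have := cl_win hN hc wx; have := cl_win hN hc wz.
rewrite /ba; set t := (if _ then _ else _); set u := cl N x; set v := cl N z.
move=> A B; have := med_lo12 u v t; have := med_hi12 u v t. lia.
Qed.

Lemma bg_between N j x z : x < N -> z < N -> minn x z <= bg N j x z <= maxn x z.
Proof.
move=> hx hz; rewrite /bg (ltn_eqF hx) (ltn_eqF hz) /=.
set t := (if _ then _ else _).
have := med_lo12 x z t; have := med_hi12 x z t. lia.
Qed.

Lemma G_between N h x z : minn x z <= Gg N h x z <= maxn x z.
Proof.
rewrite /Gg; set t := (if _ then _ else _).
have := med_lo12 x z t; have := med_hi12 x z t. lia.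
Qed.

Lemma okp_le N a c : okp N a c -> (a <= N) && (c <= N).
Proof. rewrite /okp; lia. Qed.

Lemma clos_t N h a1 c1 a2 c2 a3 c3 : 3 <= N -> 2 <= h <= N.-1 ->
  okp N a1 c1 -> okp N a2 c2 -> okp N a3 c3 ->
  okp N (ta N h a1 a2 a3) (tg N h c1 c2 c3).
Proof.
move=> hN hh o1 o2 o3.
have /andP[a1N c1N] := okp_le o1; have /andP[a2N c2N] := okp_le o2.
have /andP[a3N c3N] := okp_le o3.
have taN : ta N h a1 a2 a3 <= N.
  rewrite /ta; case: eqP => // _.
  have := med_hi12 (ba N h.-1 a1 a3) a2 (ba N h a1 a3).
  have := ba_le h.-1 a1 a3 (ltnW (ltnW hN)). lia.
rewrite /okp taN /=.
rewrite /tg; case: (c1 =P c3) => [e13|n13].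
- subst c3; case: (c1 =P N) => [->|nN]; first by rewrite ?eqxx.
  have hc1 : c1 < N by lia.
  move: o1 o3; rewrite /okp (introF eqP nN) hc1 /= => /andP[_ w1] /andP[_ w3].
  rewrite /ta; case: eqP => // n13.
  have := ba_win h.-1 (ltnW (ltnW hN)) hc1 w1 w3.
  have := ba_win h (ltnW (ltnW hN)) hc1 w1 w3.
  have := med_lo13 (ba N h.-1 a1 a3) a2 (ba N h a1 a3).
  have := med_hi13 (ba N h.-1 a1 a3) a2 (ba N h a1 a3). lia.
- case: ifP => [_|]; first by rewrite eqxx.
  move/negbT; rewrite negb_or => /andP[n1 n3].
  have hc1 : c1 < N by lia.
  have hc3 : c3 < N by lia.
  move: o1 o3; rewrite /okp (negbTE n1) (negbTE n3) hc1 hc3 /= => /andP[_ w1] /andP[_ w3].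
  have nc : c1 != c3 by apply/eqP.
  apply/orP; right.
  have hh' : 1 <= h.-1 <= N.-1 by lia.
  have hh2 : 1 <= h <= N.-1 by lia.
  rewrite /ta; case: (a1 =P a3) => [e13|na].
  + subst a3.
    have hb : minn c1 c3 <= (if c2 == N then Gg N h c1 c3
                          else med (bg N h.-1 c1 c3) c2 (bg N h c1 c3)) <= maxn c1 c3.
      case: eqP => _; first exact: G_between.
      have := bg_between h.-1 hc1 hc3; have := bg_between h hc1 hc3.
      have := med_lo13 (bg N h.-1 c1 c3) c2 (bg N h c1 c3).
      have := med_hi13 (bg N h.-1 c1 c3) c2 (bg N h c1 c3). lia.
    move: hb; case: (_ == _) => hb; lia.
  + have na' : a1 != a3 by apply/eqP.
    case: (c2 =P N) => [e2|n2].
    * have [A B] := LG hN hh hc1 hc3 w1 w3 nc na'.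
      have := G_between N h c1 c3.
      have := med_lo13 (ba N h.-1 a1 a3) a2 (ba N h a1 a3).
      have := med_hi13 (ba N h.-1 a1 a3) a2 (ba N h a1 a3). lia.
    * have hc2 : c2 < N by lia.
      move: o2; rewrite /okp (introF eqP n2) hc2 /= => /andP[_ w2].
      have := Lb hN hh' hc1 hc3 w1 w3 nc na'.
      have := Lb hN hh2 hc1 hc3 w1 w3 nc na'.
      move=> /andP[B1 B2] /andP[A1 A2].
      have lo : med (bg N h.-1 c1 c3) c2 (bg N h c1 c3) <= med (ba N h.-1 a1 a3) a2 (ba N h a1 a3).
        apply: med_mono => //; lia.
      have hi : med (ba N h.-1 a1 a3) a2 (ba N h a1 a3) <= (med (bg N h.-1 c1 c3) c2 (bg N h c1 c3)).+1.
        rewrite -med_S; apply: med_mono => //; lia.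
      have := bg_between h.-1 hc1 hc3; have := bg_between h hc1 hc3.
      have := med_hi13 (bg N h.-1 c1 c3) c2 (bg N h c1 c3). lia.
Qed.

Lemma clos_p N a1 c1 a2 c2 a3 c3 : 3 <= N ->
  okp N a1 c1 -> okp N a2 c2 -> okp N a3 c3 ->
  okp N (pa N a1 a2 a3) (pg N c1 c2 c3).
Proof.
move=> hN o1 o2 o3.
have /andP[a1N c1N] := okp_le o1.
have paw : forall c, c < N -> c <= a1 <= c.+1 -> c <= pa N a1 a2 a3 <= c.+1.
  move=> c hc w; rewrite /pa; case: ifP => _ //; apply: cl_win => //; lia.
have paN : pa N a1 a2 a3 <= N by rewrite /pa /cl; case: ifP => _; lia.
rewrite /okp paN /=.
have key : pg N c1 c2 c3 = N \/ pg N c1 c2 c3 = c1.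
  rewrite /pg; case: ifP => _; [by right|]; case: ifP => _; [by left|by right].
case: key => ->; first by rewrite eqxx.
move: o1; rewrite /okp => /andP[_ /orP[->//|/andP[hc w]]].
by rewrite hc paw ?orbT.
Qed.

Lemma clos_q N a1 c1 a2 c2 a3 c3 : 3 <= N ->
  okp N a1 c1 -> okp N a2 c2 -> okp N a3 c3 ->
  okp N (qa N a1 a2 a3) (qg N c1 c2 c3).
Proof.
move=> hN o1 o2 o3.
have /andP[a3N c3N] := okp_le o3.
have /andP[a1N c1N] := okp_le o1.
have qaw : forall c, c < N -> c <= a3 <= c.+1 -> c <= qa N a1 a2 a3 <= c.+1.
  move=> c hc w; rewrite /qa; case: eqP => [->//|_]; case: ifP => _ //; apply: cl_win => //; lia.
have qaN : qa N a1 a2 a3 <= N by rewrite /qa /cl; case: ifP => _; [|case: ifP => _]; lia.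
rewrite /okp qaN /=.
have key : qg N c1 c2 c3 = N \/ qg N c1 c2 c3 = c3.
  rewrite /qg; case: eqP => [->|_]; [by right|]; case: ifP => _; [by right|].
  case: ifP => _; [by left|by right].
case: key => ->; first by rewrite eqxx.
move: o3; rewrite /okp => /andP[_ /orP[->//|/andP[hc w]]].
by rewrite hc qaw ?orbT.
Qed.

Lemma clos N f a1 c1 a2 c2 a3 c3 : 3 <= N ->
  okp N a1 c1 -> okp N a2 c2 -> okp N a3 c3 ->
  okp N (fa N f a1 a2 a3) (fg N f c1 c2 c3).
Proof.
move=> hN o1 o2 o3; rewrite /fa /fg.
case: ifP => hf; first exact: clos_p.
case: ifP => hf2; last exact: clos_q.
apply: clos_t => //; lia.
Qed.

Lemma ba_inc N j j' x z : 2 <= N -> x < z -> z <= N -> j <= j' ->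
  x <= ba N j x z /\ ba N j x z <= ba N j' x z /\ ba N j' x z <= z.
Proof.
move=> hN xz zN jj; rewrite /ba (ltnW xz).
have A := med_lo12 (cl N x) (cl N z) j.
have B := med_hi12 (cl N x) (cl N z) j'.
have C : med (cl N x) (cl N z) j <= med (cl N x) (cl N z) j' by apply: med_mono.
move: A B C; rewrite /cl; lia.
Qed.

Lemma ba_dec N j j' x z : 2 <= N -> z < x -> x <= N -> j <= j' -> j' <= N ->
  z <= ba N j' x z /\ ba N j' x z <= ba N j x z /\ ba N j x z <= x.
Proof.
move=> hN xz zN jj jN; rewrite /ba (_ : (x <= z) = false); last by lia.
have A := med_lo12 (cl N x) (cl N z) (N - j').
have B := med_hi12 (cl N x) (cl N z) (N - j).
have C : med (cl N x) (cl N z) (N - j') <= med (cl N x) (cl N z) (N - j) by apply: med_mono => //; lia.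
move: A B C; rewrite /cl; lia.
Qed.

Lemma ta_xxz N h x z : 3 <= N -> 2 <= h <= N.-1 -> x <= N -> z <= N -> x != z ->
  ta N h x x z = ba N h.-1 x z.
Proof.
move=> hN hh xN zN nxz; rewrite /ta (negbTE nxz); apply: med_eq1.
have [xz|zx] := ltnP x z.
- have [A [B C]] := @ba_inc N h.-1 h x z (ltnW hN) xz zN (leq_pred h). by rewrite A B.
- have zx' : z < x by rewrite ltn_neqAle eq_sym nxz zx andbT.
  have [A [B C]] := @ba_dec N h.-1 h x z (ltnW hN) zx' xN (leq_pred h) (leq_trans (proj2 (andP hh)) (leq_pred N)).
  by rewrite B C orbT.
Qed.

Lemma ta_xzz N h x z : 3 <= N -> 2 <= h <= N.-1 -> x <= N -> z <= N -> x != z ->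
  ta N h x z z = ba N h x z.
Proof.
move=> hN hh xN zN nxz; rewrite /ta (negbTE nxz).
rewrite /med. set p := ba N h.-1 x z; set q := ba N h x z.
have [xz|zx] := ltnP x z.
- have [A [B C]] := @ba_inc N h.-1 h x z (ltnW hN) xz zN (leq_pred h). rewrite -/p -/q in A B C. lia.
- have zx' : z < x by rewrite ltn_neqAle eq_sym nxz zx andbT.
  have [A [B C]] := @ba_dec N h.-1 h x z (ltnW hN) zx' xN (leq_pred h) (leq_trans (proj2 (andP hh)) (leq_pred N)).
  rewrite -/p -/q in A B C. lia.
Qed.

Lemma ba_1 N x z : 3 <= N -> x <= N -> z <= N -> x != z -> ba N 1 x z = cl N x.
Proof. move=> hN xN zN nxz; rewrite /ba /med /cl; case: ifP => ?; lia. Qed.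

Lemma ba_N1 N x z : 3 <= N -> x <= N -> z <= N -> x != z -> ba N N.-1 x z = cl N z.
Proof. move=> hN xN zN nxz; rewrite /ba /med /cl; case: ifP => ?; lia. Qed.

Lemma Tg_mono i j : i <= j -> Tg i <= Tg j.
Proof. rewrite /Tg; do 2 case: eqP => ?; lia. Qed.

Lemma tg_xxz N h x z : 3 <= N -> 2 <= h <= N.-1 -> x <= N -> z <= N -> x != z ->
  tg N h x x z = bg N h.-1 x z.
Proof.
move=> hN hh xN zN nxz; rewrite /tg /bg (negbTE nxz).
case: ifP => // /negbT; rewrite negb_or => /andP[nx nz].
rewrite (negbTE nx) (negbTE nz) /=.
have T1 := @Tg_mono h.-1 h (leq_pred h).
have T2 : Tg h <= N.-1 by rewrite /Tg; case: eqP => ?; lia.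
apply: med_eq1; rewrite /med.
case: ifP => xz; lia.
Qed.

Lemma tg_xzz N h x z : 3 <= N -> 2 <= h <= N.-1 -> x <= N -> z <= N -> x != z ->
  tg N h x z z = bg N h x z.
Proof.
move=> hN hh xN zN nxz; rewrite /tg /bg (negbTE nxz).
case: ifP => // /negbT; rewrite negb_or => /andP[nx nz].
rewrite (negbTE nx) (negbTE nz) /=.
have T1 := @Tg_mono h.-1 h (leq_pred h).
have T2 : Tg h <= N.-1 by rewrite /Tg; case: eqP => ?; lia.
rewrite /med.
case: ifP => xz; lia.
Qed.

Lemma bg_1 N x z : 3 <= N -> x <= N -> z <= N ->
  bg N 1 x z = if (x == N) || (z == N) then N else x.
Proof.
move=> hN xN zN; rewrite /bg /Tg /=; case: ifP => // /negbT; rewrite negb_or => /andP[nx nz].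
rewrite /med; case: ifP => ?; lia.
Qed.

Lemma bg_N1 N x z : 3 <= N -> x <= N -> z <= N ->
  bg N N.-1 x z = if (x == N) || (z == N) then N else z.
Proof.
move=> hN xN zN; rewrite /bg /Tg (_ : (N.-1 == 1) = false); last by lia.
case: ifP => // /negbT; rewrite negb_or => /andP[nx nz]; rewrite /med; case: ifP => ?; lia.
Qed.


Definition IDs (F : nat -> nat -> nat -> nat -> nat) (N : nat) :=
  forall x y z, x <= N -> y <= N -> z <= N ->
    (forall f, F f x y x = x) /\
    F 1 x z z = x /\ F 1 x x z = F 2 x x z /\
    (forall h, 2 <= h -> h < N.-1 -> F h x z z = F h.+1 x x z) /\
    F N.-1 x z z = F N x z z /\ F N x x z = z.

Lemma fa_code N h : 2 <= h -> h < N -> fa N h = ta N h.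
Proof. move=> h2 hN; rewrite /fa (_ : (h <= 1) = false) ?hN //; by case: h h2 {hN} => [|[]]. Qed.
Lemma fa_1 N : fa N 1 = pa N. Proof. by []. Qed.
Lemma fa_N N : 2 <= N -> fa N N = qa N.
Proof. move=> h; rewrite /fa ltnn (_ : (N <= 1) = false) //; by case: N h => [|[]]. Qed.

Lemma fa_ids N : 3 <= N -> IDs (fa N) N.
Proof.
move=> hN x y z xN yN zN.
have hN2 : 2 <= N by apply: ltnW.
have c2 : fa N 2 = ta N 2 by apply: fa_code.
have cN1 : fa N N.-1 = ta N N.-1.
  apply: fa_code; lia.
rewrite fa_1 (fa_N hN2) c2 cN1.
split.
  move=> f; rewrite /fa; case: ifP => _; first by rewrite /pa eqxx.
  by case: ifP => _; [rewrite /ta eqxx|rewrite /qa eqxx].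
split; first by rewrite /pa eqxx orbT.
case: (x =P z) => [<-|nxz].
  split; first by rewrite /pa /ta eqxx.
  split; last by rewrite /ta /qa eqxx.
  move=> h h2 hN1; rewrite !fa_code //; try lia.
  by rewrite /ta eqxx.
have nxz' : x != z by apply/eqP.
have hh2 : 2 <= 2 <= N.-1 by apply/andP; split => //; lia.
split; first by rewrite ta_xxz // ba_1 // /pa (negbTE nxz').
split.
  move=> h h2 hN1.
  have e1 : h < N by lia.
  have e2 : h.+1 < N by lia.
  rewrite (fa_code h2 e1) (fa_code (leqW h2) e2).
  have r1 : 2 <= h <= N.-1 by apply/andP; split => //; lia.
  have r2 : 2 <= h.+1 <= N.-1 by apply/andP; split; lia.
  by rewrite (ta_xzz hN r1) // (ta_xxz hN r2).
split.
  have r1 : 2 <= N.-1 <= N.-1 by apply/andP; split => //; lia.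
  by rewrite (ta_xzz hN r1) // ba_N1 // /qa (negbTE nxz').
by rewrite /qa; case: eqP => [->|]; rewrite ?eqxx.
Qed.

Lemma fg_code N h : 2 <= h -> h < N -> fg N h = tg N h.
Proof. move=> h2 hN; rewrite /fg (_ : (h <= 1) = false) ?hN //; by case: h h2 {hN} => [|[]]. Qed.
Lemma fg_1 N : fg N 1 = pg N. Proof. by []. Qed.
Lemma fg_N N : 2 <= N -> fg N N = qg N.
Proof. move=> h; rewrite /fg ltnn (_ : (N <= 1) = false) //; by case: N h => [|[]]. Qed.

Lemma fg_ids N : 3 <= N -> IDs (fg N) N.
Proof.
move=> hN x y z xN yN zN.
have hN2 : 2 <= N by apply: ltnW.
have c2 : fg N 2 = tg N 2 by apply: fg_code.
have cN1 : fg N N.-1 = tg N N.-1 by apply: fg_code; lia.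
rewrite fg_1 (fg_N hN2) c2 cN1.
split.
  move=> f; rewrite /fg; case: ifP => _; first by rewrite /pg eqxx.
  by case: ifP => _; [rewrite /tg eqxx|rewrite /qg eqxx].
split; first by rewrite /pg eqxx orbT.
case: (x =P z) => [<-|nxz].
  split; first by rewrite /pg /tg eqxx.
  split; last by rewrite /tg /qg eqxx.
  move=> h h2 hN1; rewrite !fg_code //; try lia.
  by rewrite /tg eqxx.
have nxz' : x != z by apply/eqP.
have hh2 : 2 <= 2 <= N.-1 by apply/andP; split => //; lia.
split.
  rewrite tg_xxz // bg_1 // /pg (negbTE nxz') /=.
  by case: (x =P N) => [->|]; case: (z =P N).
split.
  move=> h h2 hN1.
  have e1 : h < N by lia.
  have e2 : h.+1 < N by lia.
  rewrite (fg_code h2 e1) (fg_code (leqW h2) e2).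
  have r1 : 2 <= h <= N.-1 by apply/andP; split => //; lia.
  have r2 : 2 <= h.+1 <= N.-1 by apply/andP; split; lia.
  by rewrite (tg_xzz hN r1) // (tg_xxz hN r2).
split.
  have r1 : 2 <= N.-1 <= N.-1 by apply/andP; split => //; lia.
  rewrite (tg_xzz hN r1) // bg_N1 // /qg (negbTE nxz') (eq_sym z x) (negbTE nxz').
  by case: (x == N) => //=; case: (z =P N) => [->|].
by rewrite /qg; case: eqP => [->|]; rewrite ?eqxx.
Qed.

Definition Nform (N f : nat) (b1 b2 b3 : bool) :=
  if f <= 1 then b1 || ~~ b2 && b3 else if f < N then b1 || b3 else b3 || b1 && ~~ b2.

Lemma fgN N f c1 c2 c3 : 3 <= N -> c1 <= N -> c2 <= N -> c3 <= N ->
  (fg N f c1 c2 c3 == N) = Nform N f (c1 == N) (c2 == N) (c3 == N).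
Proof.
move=> hN h1 h2 h3; rewrite /fg /Nform.
case: ifP => _.
  by rewrite /pg; case: ifP => ?; [|case: ifP => ?]; lia.
case: ifP => _.
  rewrite /tg; case: ifP => ?; first lia.
  case: ifP => hh; first lia.
  have hc1 : c1 < N by lia.
  have hc3 : c3 < N by lia.
  have := G_between N f c1 c3.
  have := bg_between f.-1 hc1 hc3; have := bg_between f hc1 hc3.
  have := med_hi13 (bg N f.-1 c1 c3) c2 (bg N f c1 c3).
  case: ifP => ?; lia.
by rewrite /qg; case: ifP => ?; [|case: ifP => ?; [|case: ifP => ?]]; lia.
Qed.

Fixpoint ren (S : signature) (X Y : Type) (f : X -> Y) (t : term S X) : term S Y :=
  match t with
  | Var x => Var (f x)
  | App g args => App g (fun i => ren f (args i))
  end.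

Lemma eval_ren S (A : algebra S) X Y (f : X -> Y) (v : Y -> A) (t : term S X) :
  @eval S A Y v (ren f t) = @eval S A X (fun x => v (f x)) t.
Proof.
elim: t => [x|g args IH] //=.
f_equal; apply: functional_extensionality => i; exact: IH.
Qed.

Lemma eval_ext S (A : algebra S) X (v v' : X -> A) (t : term S X) :
  (forall x, v x = v' x) -> @eval S A X v t = @eval S A X v' t.
Proof. move=> h; have -> // : v = v'; exact: functional_extensionality. Qed.

Definition o4 (k : nat) : 'I_4 := inord k.
Definition sel3 (a b c : 'I_4) : 'I_3 -> 'I_4 := fun i => nth a [:: a; b; c] i.

Lemma top4_ren S (A : algebra S) (t : term S 'I_3) (a b c : 'I_4) (x y z w : A) :
  top4 (ren (sel3 a b c) t) x y z w =
  top3 t (nth x [:: x; y; z; w] a) (nth x [:: x; y; z; w] b) (nth x [:: x; y; z; w] c).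
Proof.
rewrite /top4 /top3 eval_ren; apply: eval_ext => i.
by case: i => [[|[|[|i]]] Hi].
Qed.

Lemma o4E k : k < 4 -> nat_of_ord (o4 k) = k.
Proof. by move=> h; rewrite /o4 inordK. Qed.

Lemma nth4 (A : Type) (x y z w : A) k : k < 4 ->
  nth x [:: x; y; z; w] (o4 k) = nth x [:: x; y; z; w] k.
Proof. by move=> h; rewrite o4E. Qed.

Definition dayu S (n : nat) (p q : term S 'I_3) (t : nat -> term S 'I_3) (k : nat) : term S 'I_4 :=
  if k == 0 then Var (o4 0)
  else if k == 1 then ren (sel3 (o4 0) (o4 1) (o4 2)) p
  else if 2 * n - 4 <= k then
    (if k == 2 * n - 4 then ren (sel3 (o4 1) (o4 2) (o4 3)) q else Var (o4 3))
  else if k %% 2 == 1 then ren (sel3 (o4 0) (o4 2) (o4 3)) (t (k.+1 %/ 2))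
  else ren (sel3 (o4 0) (o4 1) (o4 3)) (t (k %/ 2).+1).

Lemma dayu0 S n p q t : @dayu S n p q t 0 = Var (o4 0). Proof. by []. Qed.
Lemma dayu1 S n p q t : 4 <= n -> @dayu S n p q t 1 = ren (sel3 (o4 0) (o4 1) (o4 2)) p.
Proof. by []. Qed.
Lemma dayuq S n p q t : 4 <= n -> @dayu S n p q t (2 * n - 4) = ren (sel3 (o4 1) (o4 2) (o4 3)) q.
Proof.
move=> hn; rewrite /dayu (_ : (2 * n - 4 == 0) = false); last lia.
rewrite (_ : (2 * n - 4 == 1) = false); last lia. by rewrite leqnn eqxx.
Qed.
Lemma dayuw S n p q t : 4 <= n -> @dayu S n p q t (2 * n - 3) = Var (o4 3).
Proof.
move=> hn; rewrite /dayu (_ : (2 * n - 3 == 0) = false); last lia.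
rewrite (_ : (2 * n - 3 == 1) = false); last lia.
rewrite (_ : (2 * n - 4 <= 2 * n - 3)); last lia.
by rewrite (_ : (2 * n - 3 == 2 * n - 4) = false); last lia.
Qed.
Lemma dayuev S n p q t h : 4 <= n -> 2 <= h <= n - 2 ->
  @dayu S n p q t (2 * h - 2) = ren (sel3 (o4 0) (o4 1) (o4 3)) (t h).
Proof.
move=> hn hh; rewrite /dayu (_ : (2 * h - 2 == 0) = false); last lia.
rewrite (_ : (2 * h - 2 == 1) = false); last lia.
rewrite (_ : (2 * n - 4 <= 2 * h - 2) = false); last lia.
rewrite (_ : ((2 * h - 2) %% 2 == 1) = false); last lia.
by rewrite (_ : ((2 * h - 2) %/ 2).+1 = h); last lia.
Qed.
Lemma dayuod S n p q t h : 4 <= n -> 2 <= h <= n - 2 ->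
  @dayu S n p q t (2 * h - 1) = ren (sel3 (o4 0) (o4 2) (o4 3)) (t h).
Proof.
move=> hn hh; rewrite /dayu (_ : (2 * h - 1 == 0) = false); last lia.
rewrite (_ : (2 * h - 1 == 1) = false); last lia.
rewrite (_ : (2 * n - 4 <= 2 * h - 1) = false); last lia.
rewrite (_ : ((2 * h - 1) %% 2 == 1) = true); last lia.
by rewrite (_ : (2 * h - 1).+1 %/ 2 = h); last lia.
Qed.

Lemma classify n k : 4 <= n -> k <= 2 * n - 3 ->
  k = 0 \/ k = 1 \/ k = 2 * n - 4 \/ k = 2 * n - 3 \/
   (exists2 h, 2 <= h <= n - 2 & (k = 2 * h - 2 \/ k = 2 * h - 1)).
Proof.
move=> hn hk.
have [->|k0] := eqVneq k 0; first by left.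
have [->|k1] := eqVneq k 1; first by right; left.
have [->|k2] := eqVneq k (2 * n - 4); first by right; right; left.
have [->|k3] := eqVneq k (2 * n - 3); first by right; right; right; left.
right; right; right; right; exists (k.+2 %/ 2); first lia.
have [e|o] := boolP (k %% 2 == 0); [left|right]; lia.
Qed.

Lemma oddE k : odd k = (k %% 2 == 1).
Proof. by rewrite modn2; case: (odd k). Qed.

Lemma part1_rev S (V : variety S) n : 4 <= n ->
  has_two_headed_directed_Gumm V n -> m_reversed_modular V (2 * n - 3).
Proof.
move=> hn [p [q [t T]]]; exists (dayu n p q t) => A HA x y z w.
have H := T A HA.
have I1 (a b : A) h : 2 <= h <= n - 2 -> top3 (t h) a b a = a.
  by move=> hh; case: (H a b a) => [h1 _]; apply: h1.
have I2 (a b : A) : top3 p a b b = a by case: (H a a b) => [_ [h2 _]].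
have I3 (a b : A) : top3 p a a b = top3 (t 2) a a b by case: (H a a b) => [_ [_ [h3 _]]].
have I4 (a b : A) h : 2 <= h < n - 2 -> top3 (t h) a b b = top3 (t h.+1) a a b.
  by move=> hh; case: (H a a b) => [_ [_ [_ [h4 _]]]]; apply: h4.
have I5 (a b : A) : top3 (t (n - 2)) a b b = top3 q a b b by case: (H a a b) => [_ [_ [_ [_ [h5 _]]]]].
have I6 (a b : A) : top3 q a a b = b by case: (H a a b) => [_ [_ [_ [_ [_ h6]]]]].
have n2 : 2 <= 2 <= n - 2 by apply/andP; split => //; lia.
split.
  move=> k hk; case: (classify hn hk) => [->|[->|[->|[->|[h hh [->|->]]]]]].
  - by rewrite dayu0 /top4 /= nth4.
  - by rewrite dayu1 // top4_ren !nth4 //= I2.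
  - by rewrite dayuq // top4_ren !nth4 //= I6.
  - by rewrite dayuw // /top4 /= nth4.
  - by rewrite dayuev // top4_ren !nth4 //= I1.
  - by rewrite dayuod // top4_ren !nth4 //= I1.
split; first by rewrite dayu0 /top4 /= nth4.
split; first by rewrite dayuw // /top4 /= nth4.
split.
  move=> k hk ok; have hk' : k <= 2 * n - 3 by lia.
  move: ok; rewrite oddE => ok.
  case: (classify hn hk') => [e|[e|[e|[e|[h hh [e|e]]]]]]; subst k; try lia.
  - by rewrite dayu1 // (dayuev p q t hn n2) !top4_ren !nth4 //= I3.
  - have [lt|ge] := ltnP h (n - 2).
    + rewrite (_ : (2 * h - 1).+1 = 2 * h.+1 - 2); last lia.
      have hh1 : 2 <= h.+1 <= n - 2 by lia.
      have hh2 : 2 <= h < n - 2 by lia.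
      by rewrite dayuod // (dayuev p q t hn hh1) !top4_ren !nth4 //= (I4 _ _ _ hh2).
    + have eh : h = n - 2 by lia.
      subst h; rewrite (_ : (2 * (n - 2) - 1).+1 = 2 * n - 4); last lia.
      by rewrite dayuod // dayuq // !top4_ren !nth4 //= I5.
move=> k hk ev; have hk' : k <= 2 * n - 3 by lia.
move: ev; rewrite oddE => ev.
case: (classify hn hk') => [e|[e|[e|[e|[h hh [e|e]]]]]]; subst k; try lia.
- by rewrite dayu0 dayu1 // /top4 /= nth4 //; rewrite -/(top4 _ x y y w) top4_ren !nth4 //= I2.
- rewrite dayuq // (_ : (2 * n - 4).+1 = 2 * n - 3); last lia.
  by rewrite dayuw // top4_ren !nth4 //= I6 /top4 /= nth4.
- rewrite (_ : (2 * h - 2).+1 = 2 * h - 1); last lia.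
  by rewrite dayuev // dayuod // !top4_ren !nth4.
Qed.

Lemma rev_to_mod S (V : variety S) m : m_reversed_modular V m -> m_modular V m.+1.
Proof.
case=> u U; exists (fun k => if k == 0 then Var (o4 0) else u k.-1) => A HA x y z w.
have [R1 [R2 [R3 [R4 R5]]]] := U A HA x y z w.
have X0 : forall a b c d : A, top4 (Var (o4 0)) a b c d = a by move=> a b c d; rewrite /top4 /= nth4.
split.
  by move=> [|k] hk /=; [rewrite X0|apply: R1].
split; first by rewrite /= X0.
split; first by rewrite /= R3.
split.
  move=> [|k] hk /=; rewrite ?X0.
    by case: (U A HA x x w w) => _ [-> _].
  by move=> ok; apply: R4 => //; rewrite -[odd _]negbK.
move=> [|k] hk //= ok.
have := (U A HA x y y w); case=> _ [_ [_ [_ R5']]].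
by apply: R5'.
Qed.

Lemma part1 S (V : variety S) n : 4 <= n ->
  has_two_headed_directed_Gumm V n ->
  m_reversed_modular V (2 * n - 3) /\ m_modular V (2 * n - 2).
Proof.
move=> hn H; have R := part1_rev hn H; split => //.
rewrite (_ : 2 * n - 2 = (2 * n - 3).+1); last lia.
exact: rev_to_mod.
Qed.

Lemma alvin_tdg S (V : variety S) n : n_directed_alvin_heads V n -> has_two_headed_directed_Gumm V n.
Proof. by case=> p [q [t [T _]]]; exists p, q, t. Qed.

Definition Sg : signature := @Signature nat (fun _ => 3).
Definition j0 : 'I_3 := @Ordinal 3 0 isT.
Definition j1 : 'I_3 := @Ordinal 3 1 isT.
Definition j2 : 'I_3 := @Ordinal 3 2 isT.

Definition Acar (N : nat) := {p : 'I_N.+1 * 'I_N.+1 | okp N p.1 p.2}.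
Definition aA N (s : Acar N) : nat := (val s).1.
Definition cA N (s : Acar N) : nat := (val s).2.

Lemma okp_inord N a c : okp N a c -> okp N (@inord N a) (@inord N c).
Proof. move=> h; have /andP[ha hc] := okp_le h; by rewrite !inordK. Qed.

Definition opA N (hN : 3 <= N) (f : nat) (s1 s2 s3 : Acar N) : Acar N :=
  exist _ (inord (fa N f (aA s1) (aA s2) (aA s3)), inord (fg N f (cA s1) (cA s2) (cA s3)))
    (okp_inord (@clos N f _ _ _ _ _ _ hN (valP s1) (valP s2) (valP s3))).

Definition AN N (hN : 3 <= N) : algebra Sg :=
  @Algebra Sg (Acar N) (fun f args => opA hN f (args j0) (args j1) (args j2)).

Lemma aA_le N (s : Acar N) : aA s <= N. Proof. by rewrite /aA -ltnS. Qed.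
Lemma cA_le N (s : Acar N) : cA s <= N. Proof. by rewrite /cA -ltnS. Qed.

Lemma aA_op N (hN : 3 <= N) f s1 s2 s3 :
  aA (opA hN f s1 s2 s3) = fa N f (aA s1) (aA s2) (aA s3).
Proof.
rewrite /aA /= inordK //.
have /andP[h _] := okp_le (@clos N f _ _ _ _ _ _ hN (valP s1) (valP s2) (valP s3)).
by rewrite ltnS.
Qed.
Lemma cA_op N (hN : 3 <= N) f s1 s2 s3 :
  cA (opA hN f s1 s2 s3) = fg N f (cA s1) (cA s2) (cA s3).
Proof.
rewrite /cA /= inordK //.
have /andP[_ h] := okp_le (@clos N f _ _ _ _ _ _ hN (valP s1) (valP s2) (valP s3)).
by rewrite ltnS.
Qed.

Lemma eqA N (s s' : Acar N) : aA s = aA s' -> cA s = cA s' -> s = s'.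
Proof.
move: s s' => [[a c] Hs] [[a' c'] Hs'] /= h1 h2; apply: val_inj => /=.
by congr pair; apply: val_inj.
Qed.

Lemma okA N (s : Acar N) : okp N (aA s) (cA s).
Proof. exact: (valP s). Qed.

Lemma compatA N (hN : 3 <= N) X (t : term Sg X) (v v' : X -> AN hN) :
  (forall x, aA (v x) = aA (v' x)) -> aA (eval v t) = aA (eval v' t).
Proof.
move=> h; elim: t => [x|f args IH] /=; first exact: h.
by rewrite !aA_op !IH.
Qed.

Lemma compatC N (hN : 3 <= N) X (t : term Sg X) (v v' : X -> AN hN) :
  (forall x, cA (v x) = cA (v' x)) -> cA (eval v t) = cA (eval v' t).
Proof.
move=> h; elim: t => [x|f args IH] /=; first exact: h.
by rewrite !cA_op !IH.
Qed.

Lemma compatN N (hN : 3 <= N) X (t : term Sg X) (v v' : X -> AN hN) :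
  (forall x, (cA (v x) == N) = (cA (v' x) == N)) -> (cA (eval v t) == N) = (cA (eval v' t) == N).
Proof.
move=> h; elim: t => [x|f args IH] /=; first exact: h.
by rewrite !cA_op !fgN ?cA_le // !IH.
Qed.

Definition Vv N (hN : 3 <= N) : variety Sg :=
  fun s t => forall v : nat -> AN hN, eval v s = eval v t.

Lemma AN_in N (hN : 3 <= N) : in_variety (Vv hN) (AN hN).
Proof. by move=> s t h v; apply: h. Qed.

Definition mkA N a c (h : okp N a c) : Acar N := exist _ (inord a, inord c) (okp_inord h).
Lemma aA_mk N a c (h : okp N a c) : aA (mkA h) = a.
Proof. by rewrite /aA /= inordK // ltnS; case/andP: (okp_le h). Qed.
Lemma cA_mk N a c (h : okp N a c) : cA (mkA h) = c.
Proof. by rewrite /cA /= inordK // ltnS; case/andP: (okp_le h). Qed.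

Lemma notmod N (hN : 3 <= N) : ~ m_modular (Vv hN) (2 * N - 1).
Proof.
case=> u U.
have ox : okp N 0 0 by rewrite /okp; lia.
have oy : okp N 0 N by rewrite /okp eqxx; lia.
have oz : okp N N N by rewrite /okp eqxx; lia.
have ow : okp N N N.-1 by rewrite /okp; lia.
pose xe : AN hN := mkA ox; pose ye : AN hN := mkA oy.
pose ze : AN hN := mkA oz; pose we : AN hN := mkA ow.
pose e k := top4 (u k) xe ye ze we.
have D := U (AN hN) (@AN_in N hN).
set m := 2 * N - 1.
have FA k : aA (e k) = aA (top4 (u k) xe xe we we).
  apply: compatA => i; case: i => [[|[|[|[|i]]]] Hi] //=; rewrite ?aA_mk //; lia.
have FC k : cA (e k) = cA (top4 (u k) xe ye ye we).
  apply: compatC => i; case: i => [[|[|[|[|i]]]] Hi] //=; rewrite ?cA_mk //; lia.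
have FN k : (cA (e k) == N) = (cA (top4 (u k) xe ye ye xe) == N).
  apply: compatN => i; case: i => [[|[|[|[|i]]]] Hi] //=; rewrite ?cA_mk //; lia.
have St k : k <= m -> cA (e k) <= aA (e k) <= (cA (e k)).+1.
  move=> hk.
  have hN' : (cA (e k) == N) = false.
    rewrite FN; case: (D xe ye ye xe) => [D1 _]; rewrite D1 // cA_mk; lia.
  have := okA (e k); rewrite /okp hN'; lia.
have Ind k : k <= m -> aA (e k) <= k %/ 2.
  elim: k => [_|k IH hk].
    case: (D xe ye ze we) => [_ [D2 _]]; by rewrite /e D2 aA_mk.
  have hk' : k <= m by apply: ltnW.
  have IH' := IH hk'.
  case: (boolP (odd k)) => ok.
  - have ec : cA (e k.+1) = cA (e k).
      rewrite !FC; case: (D xe ye ye we) => [_ [_ [_ [_ D5]]]].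
      by rewrite (D5 k hk ok).
    have := St _ hk; have := St _ hk'.
    move: ok; rewrite oddE => ok; lia.
  - have ea : aA (e k.+1) = aA (e k).
      rewrite !FA; case: (D xe xe we we) => [_ [_ [_ [D4 _]]]].
      by rewrite (D4 k hk ok).
    move: ok; rewrite oddE => ok; lia.
have := Ind m (leqnn m).
case: (D xe ye ze we) => [_ [_ [D3 _]]].
rewrite /e D3 aA_mk /m; lia.
Qed.

Lemma lift3 N (hN : 3 <= N) (B : algebra Sg) (HB : in_variety (Vv hN) B) (s1 s2 : term Sg 'I_3) :
  (forall a b c : AN hN, top3 s1 a b c = top3 s2 a b c) ->
  forall x y z : B, top3 s1 x y z = top3 s2 x y z.
Proof.
move=> h x y z.
have HV : Vv hN (ren (fun i : 'I_3 => nat_of_ord i) s1) (ren (fun i : 'I_3 => nat_of_ord i) s2).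
  move=> v; rewrite !eval_ren.
  have E s : @eval Sg (AN hN) _ (fun i : 'I_3 => v i) s = top3 s (v 0) (v 1) (v 2).
    rewrite /top3; apply: eval_ext => i; by case: i => [[|[|[|i]]] Hi].
  by rewrite !E h.
have H' := HB _ _ HV (fun j => nth x [:: x; y; z] j).
rewrite !eval_ren in H'; exact: H'.
Qed.

Definition pat (f : nat) (a b c : 'I_3) : term Sg 'I_3 :=
  @App Sg 'I_3 f (fun i : 'I_3 => Var (nth a [:: a; b; c] i)).

Lemma pat_eq (B : algebra Sg) f (a b c : 'I_3) (x y z : B) :
  top3 (pat f a b c) x y z =
  top3 (pat f j0 j1 j2) (nth x [:: x; y; z] a) (nth x [:: x; y; z] b) (nth x [:: x; y; z] c).
Proof.
rewrite /top3 /=; f_equal; apply: functional_extensionality => i.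
by case: i => [[|[|[|i]]] Hi].
Qed.

Lemma pat_AN N (hN : 3 <= N) f (a b c : AN hN) : top3 (pat f j0 j1 j2) a b c = opA hN f a b c.
Proof. by []. Qed.

Lemma alvin_ex N (hN : 3 <= N) : n_directed_alvin_heads (Vv hN) N.+1.
Proof.
have e2 : N.+1 - 2 = N.-1 by lia.
have hF := fa_ids hN; have hG := fg_ids hN.
have L := @lift3 N hN.
pose F a b c := hF (aA a) (aA b) (aA c) (aA_le a) (aA_le b) (aA_le c).
pose G a b c := hG (cA a) (cA b) (cA c) (cA_le a) (cA_le b) (cA_le c).
have Kxyx f : forall a b c : AN hN, top3 (pat f j0 j1 j0) a b c = top3 (Var j0) a b c.
  move=> a b c; rewrite /top3 /=; apply: eqA; rewrite ?aA_op ?cA_op.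
  + by case: (F a b c) => [->].
  + by case: (G a b c) => [->].
exists (pat 1 j0 j1 j2), (pat N j0 j1 j2), (fun h => pat h j0 j1 j2).
split; last first.
  move=> B HB x y; split.
  - by have := L B HB _ _ (Kxyx 1) x y x; rewrite pat_eq.
  - by have := L B HB _ _ (Kxyx N) x y x; rewrite pat_eq.
move=> B HB x y z; rewrite e2.
split.
  by move=> h hh; have := L B HB _ _ (Kxyx h) x y x; rewrite pat_eq.
split.
  have K : forall a b c : AN hN, top3 (pat 1 j0 j2 j2) a b c = top3 (Var j0) a b c.
    move=> a b c; rewrite /top3 /=; apply: eqA; rewrite ?aA_op ?cA_op.
    + by case: (F a b c) => [_ [->]].
    + by case: (G a b c) => [_ [->]].
  by have := L B HB _ _ K x y z; rewrite pat_eq.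
split.
  have K : forall a b c : AN hN, top3 (pat 1 j0 j0 j2) a b c = top3 (pat 2 j0 j0 j2) a b c.
    move=> a b c; rewrite /top3 /=; apply: eqA; rewrite ?aA_op ?cA_op.
    + by case: (F a b c) => [_ [_ [->]]].
    + by case: (G a b c) => [_ [_ [->]]].
  by have := L B HB _ _ K x y z; rewrite (@pat_eq B 1) (@pat_eq B 2).
split.
  move=> h /andP[hh1 hh2].
  have K : forall a b c : AN hN, top3 (pat h j0 j2 j2) a b c = top3 (pat h.+1 j0 j0 j2) a b c.
    move=> a b c; rewrite /top3 /=; apply: eqA; rewrite ?aA_op ?cA_op.
    + case: (F a b c) => [_ [_ [_ [E _]]]]; rewrite E //; lia.
    + case: (G a b c) => [_ [_ [_ [E _]]]]; rewrite E //; lia.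
  by have := L B HB _ _ K x y z; rewrite (@pat_eq B h) (@pat_eq B h.+1).
split.
  have K : forall a b c : AN hN, top3 (pat N.-1 j0 j2 j2) a b c = top3 (pat N j0 j2 j2) a b c.
    move=> a b c; rewrite /top3 /=; apply: eqA; rewrite ?aA_op ?cA_op.
    + by case: (F a b c) => [_ [_ [_ [_ [->]]]]].
    + by case: (G a b c) => [_ [_ [_ [_ [->]]]]].
  by have := L B HB _ _ K x y z; rewrite (@pat_eq B N.-1) (@pat_eq B N).
have K : forall a b c : AN hN, top3 (pat N j0 j0 j2) a b c = top3 (Var j2) a b c.
  move=> a b c; rewrite /top3 /=; apply: eqA; rewrite ?aA_op ?cA_op.
  + by case: (F a b c) => [_ [_ [_ [_ [_ ->]]]]].
  + by case: (G a b c) => [_ [_ [_ [_ [_ ->]]]]].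
by have := L B HB _ _ K x y z; rewrite pat_eq.
Qed.

Lemma lf N (hN : 3 <= N) : locally_finite (Vv hN).
Proof.
move=> B HB k g gen.
case: (classic (exists b : B, True)) => [[b0 _]|nb]; last first.
  exists 0; unshelve eexists.
    move=> [i hi]; exfalso; by move: hi; rewrite ltn0.
  by move=> a; case: nb; exists a.
have [t0 _] := gen b0.
pose F := {ffun {ffun 'I_k -> Acar N} -> Acar N}.
pose code (t : term Sg 'I_k) : F :=
  [ffun w : {ffun 'I_k -> Acar N} => @eval Sg (AN hN) 'I_k (fun i => w i) t].
pose pick (phi : F) : term Sg 'I_k := epsilon (inhabits t0) (fun t => code t = phi).
exists #|F|; exists (fun i => @eval Sg B 'I_k g (pick (enum_val i))).
move=> a; have [t Ht] := gen a.
exists (enum_rank (code t)); rewrite enum_rankK -Ht.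
have Hc : code (pick (code t)) = code t.
  by apply: (epsilon_spec (inhabits t0) (fun t' => code t' = code t)); exists t.
move: (pick (code t)) Hc => t' Hc.
have HV : Vv hN (ren (fun i : 'I_k => nat_of_ord i) t') (ren (fun i : 'I_k => nat_of_ord i) t).
  move=> v; rewrite !eval_ren.
  have := congr1 (fun phi : F => phi [ffun i => v (nat_of_ord i)]) Hc.
  rewrite /code !ffunE.
  have E s : @eval Sg (AN hN) 'I_k (fun i => [ffun i => v (nat_of_ord i)] i) s =
             @eval Sg (AN hN) 'I_k (fun i => v (nat_of_ord i)) s.
    by apply: eval_ext => i; rewrite ffunE.
  by rewrite !E.
pose vB (j : nat) : B := odflt b0 (omap g (insub j)).
have H' := HB _ _ HV vB.
rewrite !eval_ren in H'.
have E s : @eval Sg B 'I_k (fun i => vB (nat_of_ord i)) s = @eval Sg B 'I_k g s.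
  by apply: eval_ext => i; rewrite /vB valK.
by rewrite -!E.
Qed.

Theorem theorem6p8 (n : nat) (hn : 4 <= n) :
  (forall (S : signature) (V : variety S),
      has_two_headed_directed_Gumm V n ->
      m_reversed_modular V (2 * n - 3) /\ m_modular V (2 * n - 2)) /\
  (forall (S : signature) (V : variety S),
      n_directed_alvin_heads V n ->
      m_reversed_modular V (2 * n - 3) /\ m_modular V (2 * n - 2)) /\
  (exists (S : signature) (V : variety S),
      locally_finite V /\ n_directed_alvin_heads V n /\
      has_two_headed_directed_Gumm V n /\ ~ m_modular V (2 * n - 3)).
Proof.
split; first by move=> S V H; exact: part1.
split; first by move=> S V H; apply: part1 => //; exact: alvin_tdg.
have hN : 3 <= n.-1 by lia.
have en : n = (n.-1).+1 by lia.
exists Sg, (Vv hN).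
have A := alvin_ex hN. rewrite -en in A.
split; first exact: lf.
split; first exact: A.
split; first exact: alvin_tdg A.
rewrite (_ : 2 * n - 3 = 2 * n.-1 - 1); last lia.
exact: notmod.
Qed.
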